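(* Let $x_1,\dots,x_n,y_1,\dots,y_m$ be independent indeterminates over $\mathbb Z$, and let $\sigma_\ell(\mathbf x)$, $\sigma_j(\mathbf y)$ denote the elementary symmetric polynomials in the $x_i$, respectively the $y_j$. Then there exist $nm\times nm$ matrices $A$ and $B$, where every entry of $A$ is an integer polynomial in $\sigma_1(\mathbf x),\dots,\sigma_n(\mathbf x)$ and every entry of $B$ is an integer polynomial in $\sigma_1(\mathbf y),\dots,\sigma_m(\mathbf y)$, such that $$\prod_{i=1}^n\prod_{j=1}^m (t-x_iy_j)=\det(tI-AB).$$
   Context: The elementary symmetric polynomials $\sigma_\ell(x_1,\dots,x_n)$ are defined by $\prod_{k=1}^n(t+x_k)=\sum_{\ell=0}^n\sigma_\ell(x_1,\dots,x_n)t^{n-\ell}$. *)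

(* Defs.v *)
From HB Require Import structures.
From mathcomp Require Import all_boot all_order all_algebra.
From mathcomp Require Import mpoly.
Set Implicit Arguments. Unset Strict Implicit. Unset Printing Implicit Defensive.
Import GRing.Theory.
Local Open Scope ring_scope.

Definition elsym (R : comNzRingType) (k : nat) (xs : 'I_k -> R) (l : nat) : R :=
  (\prod_(i < k) ('X + (xs i)%:P))`_(k - l).

Definition xvar (n m : nat) (i : 'I_n) : {mpoly int[n + m]} := 'X_(lshift m i).
Definition yvar (n m : nat) (j : 'I_m) : {mpoly int[n + m]} := 'X_(rshift n j).

(* Main.v *)
Require Import Defs.
From HB Require Import structures.
From mathcomp Require Import all_boot all_order all_algebra.
From mathcomp Require Import mpoly.
From mathcomp Require Import fraction zify.
From mathcomp.real_closed Require Import mxtens.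
Set Implicit Arguments. Unset Strict Implicit. Unset Printing Implicit Defensive.
Import GRing.Theory.
Local Open Scope ring_scope.
Section Comp.
Variable R : comNzRingType.

Definition compmx n (p : {poly R}) : 'M[R]_n :=
  \matrix_(i, j) if i == n.-1 :> nat then - p`_j else (i.+1 == j :> nat)%:R.

Lemma compmx_eig n (p : {poly R}) (a : R) (k : 'I_n) :
  size p = n.+1 -> p \is monic -> root p a ->
  \sum_(j < n) compmx n p k j * a ^+ j = a * a ^+ k.
Proof.
move=> sp mp /rootP ra.
rewrite -exprS.
have := ra; rewrite horner_coef sp big_ord_recr /=.
have -> : p`_n = 1 by move/monicP: mp; rewrite /lead_coef sp.
rewrite mul1r => /eqP; rewrite addrC addr_eq0 => /eqP en.
have [kn|kn] := eqVneq (k : nat) n.-1.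
  have e : k.+1 = n by have := ltn_ord k; move: kn; clear; lia.
  rewrite (_ : a ^+ k.+1 = a ^+ n); last by rewrite e.
  rewrite en -sumrN; apply: eq_bigr => j _; rewrite mxE ifT ?mulNr //; exact/eqP.
have kn1 : (k.+1 < n)%N.
  by have := ltn_ord k; move: kn => /eqP; clear; lia.
rewrite (bigD1 (Ordinal kn1)) //= mxE (negbTE kn) eqxx mul1r big1 ?addr0 //.
move=> j /negbTE jn; rewrite mxE (negbTE kn).
by rewrite -val_eqE /= in jn; rewrite eq_sym jn mul0r.
Qed.
End Comp.
Lemma comp_diag (R : idomainType) n (a : 'I_n -> R) : injective a ->
  exists V : 'M[R]_n,
    compmx n (\prod_(i < n) ('X - (a i)%:P)) *m V = V *m diag_mx (\row_k a k)
    /\ \det V != 0.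
Proof.
move=> ia; set p := \prod_(i < n) _.
have sp : size p = n.+1 by rewrite size_prod_XsubC [index_enum _]unlock -enumT size_enum_ord.
have mp : p \is monic by apply: monic_prod_XsubC.
have rp k : root p (a k).
  by rewrite /p (bigD1 k) //= rootM root_XsubC eqxx.
exists (Vandermonde n (\row_k a k)); split.
  apply/matrixP => i k; rewrite mul_mx_diag !mxE.
  rewrite -[RHS]mulrC -(compmx_eig i sp mp (rp k)).
  by apply: eq_bigr => j _; rewrite !mxE.
rewrite det_Vandermonde; apply/prodf_neq0 => i _; apply/prodf_neq0 => j ij.
rewrite !mxE subr_eq0; apply/negP => /eqP /ia eji.
by move: ij; rewrite eji ltnn.
Qed.
Lemma char_poly_sim (R : idomainType) k (M P D : 'M[R]_k) :
  M *m P = P *m D -> \det P != 0 -> char_poly M = char_poly D.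
Proof.
move=> e dP.
have E : char_poly_mx M *m map_mx polyC P = map_mx polyC P *m char_poly_mx D.
  rewrite /char_poly_mx mulmxBl mulmxBr mul_scalar_mx mul_mx_scalar.
  by rewrite -!map_mxM e.
have := congr1 determinant E; rewrite !det_mulmx [RHS]mulrC /char_poly.
apply: mulIf; rewrite det_map_mx polyC_eq0 //.
Qed.

Lemma det_ne0_tens (R : idomainType) a b (V : 'M[R]_a) (W : 'M[R]_b) :
  \det V != 0 -> \det W != 0 -> \det (V *t W) != 0.
Proof.
move=> dV dW.
have [a0|a0] := eqVneq a 0%N.
  move: (V *t W); rewrite a0 => X; by rewrite det_mx00 oner_eq0.
have [b0|b0] := eqVneq b 0%N.
  move: (V *t W); rewrite b0 muln0 => X; by rewrite det_mx00 oner_eq0.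
have uV : map_mx (@tofrac R) V \in unitmx.
  by rewrite unitmxE det_map_mx unitfE tofrac_eq0.
have uW : map_mx (@tofrac R) W \in unitmx.
  by rewrite unitmxE det_map_mx unitfE tofrac_eq0.
have := tensmx_unit a0 b0 uV uW.
by rewrite -map_mxT unitmxE det_map_mx unitfE tofrac_eq0.
Qed.

Lemma entry_ok (S : comNzRingType) N (xs : 'I_N -> S) (a b : 'I_N) :
  exists p : {mpoly int[N]},
    compmx N (\prod_(i < N) ('X - (- xs i)%:P)) a b
    = mmap (fun c : int => c%:~R) (fun k => elsym xs k.+1) p.
Proof.
rewrite mxE; case: ifP => _; last first.
  by exists ((a.+1 == b :> nat)%:R); rewrite rmorph_nat.
have kN : (N - b.+1 < N)%N by have := ltn_ord b; lia.
exists (- 'X_(Ordinal kN)); rewrite rmorphN /= mmapX mmap1U /= /elsym.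
congr (- _); rewrite (_ : (N - (N - b.+1).+1 = b)%N); last first.
  by have := ltn_ord b; lia.
rewrite (eq_bigr (fun i => 'X + (xs i)%:P)) // => i _.
by rewrite rmorphN opprK.
Qed.

Theorem mainTheorem5 (n m : nat) :
  exists (A B : 'M[{mpoly int[n + m]}]_(n * m)),
    (forall i j, exists p : {mpoly int[n]},
        A i j = mmap (fun c : int => c%:~R) (fun k : 'I_n => elsym (@xvar n m) k.+1) p) /\
    (forall i j, exists q : {mpoly int[m]},
        B i j = mmap (fun c : int => c%:~R) (fun k : 'I_m => elsym (@yvar n m) k.+1) q) /\
    \prod_(i < n) \prod_(j < m) ('X - (@xvar n m i * @yvar n m j)%:P)
      = \det ('X%:M - map_mx polyC (A *m B)).
Proof.
pose ax : 'I_n -> {mpoly int[n + m]} := fun i => - @xvar n m i.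
pose ay : 'I_m -> {mpoly int[n + m]} := fun j => - @yvar n m j.
have Xinj (i j : 'I_(n + m)) : 'X_i = 'X_j :> {mpoly int[n + m]} -> i = j.
  move=> e; have := congr1 (fun p => p@_U_(i)%MM) e => /=.
  rewrite !mcoeffXU eqxx; case: eqP => // _ /eqP; rewrite oner_eq0 //.
have iax : injective ax.
  by move=> i j /oppr_inj /Xinj /lshift_inj.
have iay : injective ay.
  by move=> i j /oppr_inj /Xinj /rshift_inj.
have [Vx [eVx dVx]] := comp_diag iax.
have [Vy [eVy dVy]] := comp_diag iay.
set Cx := compmx n _ in eVx.
set Cy := compmx m _ in eVy.
exists (Cx *t 1%:M), (1%:M *t Cy).
split; [|split].
- move=> k l.
  case: (mxtens_indexP k) => i j; case: (mxtens_indexP l) => i' j'.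
  rewrite tensmxE.
  have [p1 e1] := entry_ok (@xvar n m) i i'.
  have e1' : Cx i i' = _ := e1.
  exists (p1 * (j == j')%:R).
  by rewrite rmorphM /= -e1' rmorph_nat; congr (_ * _); rewrite mxE.
- move=> k l.
  case: (mxtens_indexP k) => i j; case: (mxtens_indexP l) => i' j'.
  rewrite tensmxE.
  have [p1 e1] := entry_ok (@yvar n m) j j'.
  have e1' : Cy j j' = _ := e1.
  exists ((i == i')%:R * p1).
  by rewrite rmorphM /= -e1' rmorph_nat; congr (_ * _); rewrite mxE.
- rewrite tensmx_mul mulmx1 mul1mx.
  have := @char_poly_sim _ _ (Cx *t Cy) (Vx *t Vy)
     (diag_mx (\row_k ax k) *t diag_mx (\row_k ay k)).
  rewrite !tensmx_mul eVx eVy => /(_ erefl (det_ne0_tens dVx dVy)).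
  rewrite /char_poly /char_poly_mx => ->.
  have -> : diag_mx (\row_k ax k) *t diag_mx (\row_k ay k) =
     diag_mx (\row_k (ax (mxtens_unindex k).1 * ay (mxtens_unindex k).2)).
    apply/matrixP => k l; rewrite !mxE.
    case: (mxtens_indexP k) => i j; case: (mxtens_indexP l) => i' j'.
    rewrite !mxtens_indexK /=.
    rewrite (inj_eq (can_inj (@mxtens_indexK n m))) xpair_eqE.
    case: (i =P i') => [->|]; case: (j =P j') => [->|] //=;
      by rewrite ?mulr0n ?mul0r ?mulr0 ?mulr1n.
  rewrite -/(char_poly_mx _) -/(char_poly _) char_poly_trig ?diag_mx_is_trig //.
  rewrite pair_big /=.
  rewrite (reindex (@mxtens_unindex n m)) /=; last first.
    by exists (@mxtens_index n m) => k _; rewrite (mxtens_indexK, mxtens_unindexK).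
  apply: eq_bigr => k _; rewrite !mxE eqxx mulr1n /ax /ay mulrNN //.
Qed.
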